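(* Let $a,b,k$ be positive integers with $\gcd(a,b)=1$. Define $a_1=a$, $a_2=b$, and $a_n=ka_{n-1}+a_{n-2}$ for $n\ge 3$. Let $(x_n)_{n\ge1}$ be the sequence $1,1,1,2,2,2,1,1,1,2,2,2,\ldots$ and $(y_n)_{n\ge1}$ the sequence $2,2,2,1,1,1,2,2,2,1,1,1,\ldots$ (blocks of three, alternating). (1) If $k$ is even, then the sequence $(\Gamma(a_n,a_{n+1}))_{n\ge1}$ is constant. (2) If $k$ is odd: (a) if $a$ and $b$ are both odd, then $(\Gamma(a_n,a_{n+1}))_{n\ge 3}$ equals $(x_n)_{n\ge1}$ or $(y_n)_{n\ge1}$; (b) if $a$ is odd and $b$ is even, then $(\Gamma(a_n,a_{n+1}))_{n\ge 2}$ equals $(x_n)_{n\ge1}$ or $(y_n)_{n\ge1}$; (c) if $a$ is even and $b$ is odd, then $(\Gamma(a_n,a_{n+1}))_{n\ge 1}$ equals $(x_n)_{n\ge1}$ or $(y_n)_{n\ge1}$.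
   Context: For relatively prime positive integers $p,q$, exactly one of the equations $px+qy=\frac{(p-1)(q-1)}{2}$ (Equation 1) and $px+qy+1=\frac{(p-1)(q-1)}{2}$ (Equation 2) has a solution in nonnegative integers $(x,y)$. For positive integers $a,b$ with $d=\gcd(a,b)$, $\Gamma(a,b)=1$ if Equation 1 with $(p,q)=(a/d,b/d)$ has a nonnegative integer solution, and $\Gamma(a,b)=2$ otherwise. A sequence indexed from $n\ge m$ ''equals'' $(x_n)_{n\ge1}$ means its $j$-th term (the one with index $n=m+j-1$) equals $x_j$ for all $j\ge1$. *)

(* Defs.v *)
From Stdlib Require Import ClassicalEpsilon.
From mathcomp Require Import all_boot.
Set Implicit Arguments. Unset Strict Implicit. Unset Printing Implicit Defensive.

(* Equation 1 for (p,q): p x + q y = (p-1)(q-1)/2 has a solution in nonnegative integers.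
   (For coprime p,q the product (p-1)(q-1) is even, so %/2 is exact.) *)
Definition eq1_solvable (p q : nat) : Prop :=
  exists x y : nat, p * x + q * y = ((p - 1) * (q - 1)) %/ 2.

Definition Gamma (a b : nat) : nat :=
  let d := gcdn a b in
  if excluded_middle_informative (eq1_solvable (a %/ d) (b %/ d)) then 1 else 2.

(* rec k a b n = a_{n+1}, where a_1 = a, a_2 = b, a_n = k a_{n-1} + a_{n-2}. *)
Fixpoint rec_pair (k a b : nat) (n : nat) : nat * nat :=
  match n with
  | 0 => (a, b)
  | n'.+1 => let (u, v) := rec_pair k a b n' in (v, k * v + u)
  end.

(* aseq k a b n = a_n for n >= 1 (1-indexed; aseq k a b 0 is a dummy equal to a_1). *)
Definition aseq (k a b : nat) (n : nat) : nat := (rec_pair k a b n.-1).1.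

Definition xseq (j : nat) : nat := if odd ((j - 1) %/ 3) then 2 else 1.
Definition yseq (j : nat) : nat := if odd ((j - 1) %/ 3) then 1 else 2.

Definition gseq_from (k a b m : nat) (s : nat -> nat) : Prop :=
  forall j, 1 <= j -> Gamma (aseq k a b (m + j - 1)) (aseq k a b (m + j)) = s j.

(* Main.v *)
Require Import Defs.
From mathcomp Require Import all_boot zify.
From Stdlib Require Import Classical ClassicalEpsilon.

Lemma odd_fwd s r x y : 0 < r -> (2*s+1)*x + r*y = s*(r-1) ->
  (2*s+1)*(x + s - y) + (r + (2*s+1))*y = s*(r + (2*s+1) - 1).
Proof. move=> r0 E. have : y <= s by nia. nia. Qed.

Lemma odd_bwd s r x y : 0 < r -> (2*s+1)*x + (r + (2*s+1))*y = s*(r + (2*s+1) - 1) ->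
  (2*s+1)*(x + y - s) + r*y = s*(r-1).
Proof. move=> r0 E. have hy : y < s \/ s = 0 by nia.
have : s <= x + y by nia. nia. Qed.

Lemma even_notboth s t x y x' y' : 0 < s -> coprime s (2*t+1) ->
  (2*s)*x + (2*t+1)*y = (2*s-1)*t ->
  (2*s)*x' + ((2*t+1) + 2*s)*y' = (2*s-1)*(t+s) -> False.
Proof.
move=> s0 co E1 E2.
have hy : y < s by nia.
have hy' : y' < s by nia.
have E : (2*t+1)*y + ((2*s-1) + 2*x)*s = (2*t+1)*y' + (2*(x'+y'))*s by nia.
have Em : (2*t+1)*y = (2*t+1)*y' %[mod s].
  by move: (congr1 (modn^~ s) E) => /=; rewrite !(addnC ((2*t+1)*_)) !modnMDl.
have H : forall u v, u < s -> v < s -> u <= v -> (2*t+1)*u = (2*t+1)*v %[mod s] -> u = v.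
  move=> u v hu hv huv /eqP; rewrite eq_sym eqn_mod_dvd ?leq_mul2l ?huv ?orbT //.
  rewrite -mulnBr Gauss_dvdr //.
  case: (posnP (v - u)) => [|p /(dvdn_leq p)]; lia.
have Hyy : y = y'.
  case: (leqP y y') => hh; first exact: H.
  symmetry; apply: H => //; exact: ltnW.
subst y'.
move: E => /eqP; rewrite eqn_add2l => /eqP /eqP; rewrite eqn_pmul2r // => /eqP; lia.
Qed.
Lemma a1 s t kn: 0 < s -> (kn * (2 * s) + 1) * t * (2 * s - 1) + t = 2 * s * (kn * t * (2 * s - 1) + t).
Proof. case: s => // s _. have -> : 2 * s.+1 - 1 = 2*s+1 by lia. have -> : 2 * s.+1 = 2*s+2 by lia. nia. Qed.
Lemma a2 s t y0 M : 0 < s -> y0 < s -> (2 * t + 1) * y0 + t = M * (2 * s) -> M <= t.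
Proof. move=> s0 hs HM.
have h1 : (2*t+1)*y0 <= (2*t+1)*(s-1) by rewrite leq_mul2l; lia.
have h2 : M * (2*s) < (t+1)*(2*s) by nia.
by move: h2; rewrite ltn_pmul2r ?addn1 //; lia.
Qed.
Lemma a3 s t y0 M : 0 < s -> M <= t -> (2 * t + 1) * y0 + t = M * (2 * s) -> 2 * s * (t - M) + (2 * t + 1) * y0 = (2 * s - 1) * t.
Proof. move=> s0 hM HM. have h : 2*s*M <= 2*s*t by rewrite leq_mul2l hM orbT.
rewrite mulnBr mulnBl. nia. Qed.
Lemma a4 s t w M : 0 < s -> w < s -> (2 * t + 1) * (s + w) + t = M * (2 * s) -> M + w <= 2*t + s.
Proof. move=> s0 hs HM.
have h1 : (2*t+1)*(s+w) <= (2*t+1)*(2*s-1) by rewrite leq_mul2l; lia.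
have h2 : M * (2*s) < (2*t+1)*(2*s) by nia.
by move: h2; rewrite ltn_pmul2r; lia.
Qed.
Lemma a5 s t w M : 0 < s -> M + w <= 2*t+s -> (2 * t + 1) * (s + w) + t = M * (2 * s) -> 
  2 * s * (2*t + s - M - w) + (2 * t + 1 + 2 * s) * w = (2 * s - 1) * (t + s).
Proof. move=> s0 hM HM. 
have h : 2*s*(M+w) <= 2*s*(2*t+s) by rewrite leq_mul2l hM orbT.
rewrite -subnDA mulnBr. case: s s0 HM h hM => // s _ HM h hM.
have -> : 2 * s.+1 - 1 = 2*s+1 by lia. nia. Qed.

Lemma even_some s t : 0 < s -> coprime (2*s) (2*t+1) ->
  (exists x y, (2*s)*x + (2*t+1)*y = (2*s-1)*t) \/
  (exists x y, (2*s)*x + ((2*t+1) + 2*s)*y = (2*s-1)*(t+s)).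
Proof.
move=> s0 co.
have r0 : 0 < 2*t+1 by lia.
case: (egcdnP (2*s) r0) => km kn.
rewrite gcdnC (eqP co) => Ekm _.
set Z := km * t * (2*s-1).
set y0 := Z %% (2*s).
have hy0 : y0 < 2*s by rewrite ltn_pmod //; lia.
have hd : 2*s %| (2*t+1)*y0 + t.
  have HZ : (2*t+1)*Z + t = (2*s) * (kn*t*(2*s-1) + t).
    rewrite /Z. have -> : (2 * t + 1) * (km * t * (2 * s - 1)) = (km*(2*t+1))*t*(2*s-1) by rewrite !mulnA [(2*t+1)*km]mulnC.
    rewrite Ekm. exact: a1.
  have : 2*s %| (2*t+1)*Z + t by rewrite HZ dvdn_mulr.
  rewrite {1}(divn_eq Z (2*s)) mulnDr -addnA dvdn_addr //.
  by rewrite mulnA dvdn_mull.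
case/dvdnP: hd => M HM.
case: (ltnP y0 s) => hs.
- left. exists (t - M), y0.
  have hM : M <= t by exact: a2 HM.
  exact: a3 HM.
- right. exists (2*t + s - M - (y0 - s)), (y0 - s).
  have e : y0 = s + (y0 - s) by lia.
  rewrite e in HM.
  have hM : M + (y0 - s) <= 2*t + s by apply: a4 HM => //; lia.
  exact: a5 HM.
Qed.

Lemma half2 a b : (2*a*b) %/ 2 = a*b.
Proof. by rewrite -mulnA mulKn. Qed.

Lemma step_odd m r : odd m -> 0 < r ->
  (eq1_solvable m (r + m) <-> eq1_solvable m r).
Proof.
move=> om r0. have [s e] : exists s, m = 2*s+1.
  exists m./2; have := odd_double_half m; rewrite om -muln2; lia.
subst m.
rewrite /eq1_solvable. have -> : 2*s+1-1 = 2*s by lia. rewrite !half2.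
split=> [[x [y E]]|[x [y E]]].
- exists (x + y - s), y. exact: odd_bwd.
- exists (x + s - y), y. exact: odd_fwd.
Qed.

Lemma step_even m r : ~~ odd m -> 0 < m -> coprime m r ->
  (eq1_solvable m (r + m) <-> ~ eq1_solvable m r).
Proof.
move=> om m0 co.
have orr : odd r.
  apply/negP => /negP orr; move: co; rewrite /coprime => /eqP g.
  have : 2 %| gcdn m r by rewrite dvdn_gcd !dvdn2 om orr.
  by rewrite g.
have [s e] : exists s, m = 2*s.
  exists m./2; have := odd_double_half m; rewrite (negbTE om) -muln2; lia.
subst m.
have [t e] : exists t, r = 2*t+1.
  exists r./2; have := odd_double_half r; rewrite orr -muln2; lia.
subst r.
have s0 : 0 < s by lia.
rewrite /eq1_solvable.
have -> : 2*t+1-1 = 2*t by lia.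
have -> : 2*t+1+2*s-1 = 2*(t+s) by lia.
have -> : (2*s-1)*(2*t) %/ 2 = (2*s-1)*t by rewrite mulnCA mulKn.
have -> : (2*s-1)*(2*(t+s)) %/ 2 = (2*s-1)*(t+s) by rewrite mulnCA mulKn.
split.
- move=> [x2 [y2 E2]] [x [y E1]].
  move: E1 E2; apply: even_notboth s0 _.
  exact: coprime_dvdl (dvdn_mull 2 (dvdnn s)) co.
- move=> H. by case: (@even_some s t s0 co) => [ex|//]; case: H.
Qed.

Lemma coprime_step u v k : coprime u v -> coprime v (k*v + u).
Proof. by move=> c; rewrite -coprime_modr modnMDl coprime_modr coprime_sym. Qed.

Lemma E_sym p q : eq1_solvable p q <-> eq1_solvable q p.
Proof.
rewrite /eq1_solvable; split=> -[x [y E]]; exists y, x; by rewrite addnC E mulnC.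
Qed.

Lemma step_k q p k : 0 < q -> 0 < p -> coprime q p ->
  (eq1_solvable q (p + k*q) <-> if odd k && ~~ odd q then ~ eq1_solvable q p else eq1_solvable q p).
Proof.
move=> q0 p0 co. elim: k => [|k IH]; first by rewrite mul0n addn0.
have co' : coprime q (p + k*q) by rewrite addnC -coprime_modr modnMDl coprime_modr.
rewrite mulSn addnCA addnC.
case oq: (odd q).
- rewrite (step_odd q (p + k*q)) //; last by rewrite addn_gt0 p0.
  by move: IH; rewrite oq !andbF.
- rewrite (step_even q (p + k*q)) ?oq //; rewrite IH /= oq !andbT.
  case: (odd k) => /=; last by [].
  split; first by move=> H; apply: NNPP.
  by move=> H H'.
Qed.

Lemma Gamma_co a b : coprime a b ->
  Gamma a b = if excluded_middle_informative (eq1_solvable a b) then 1 else 2.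
Proof. by move=> co; rewrite /Gamma (eqP co) !divn1. Qed.

Lemma Gamma12 a b : Gamma a b = 1 \/ Gamma a b = 2.
Proof. rewrite /Gamma; case: excluded_middle_informative; by [left|right]. Qed.

Lemma Gamma_step p q k : 0 < p -> 0 < q -> coprime p q ->
  Gamma q (k*q + p) = if odd k && ~~ odd q then 3 - Gamma p q else Gamma p q.
Proof.
move=> p0 q0 co.
have co' : coprime q (k*q + p) by apply: coprime_step.
rewrite (Gamma_co _ _ co') (Gamma_co _ _ co).
have H := step_k q p k q0 p0 (etrans (coprime_sym _ _) co).
rewrite addnC in H.
case: excluded_middle_informative => h1; case: excluded_middle_informative => h2;
  case: (odd k && ~~ odd q) H => H //.
- by exfalso; exact: (proj1 H h1) (proj1 (E_sym p q) h2).
- by exfalso; exact: h2 (proj2 (E_sym _ _) (proj1 H h1)).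
- by exfalso; exact: h1 (proj2 H (proj1 (E_sym p q) h2)).
- by exfalso; exact: h1 (proj2 H (fun e => h2 (proj2 (E_sym p q) e))).
Qed.

Lemma rp1 k a b n : (rec_pair k a b n.+1).1 = (rec_pair k a b n).2.
Proof. by rewrite /=; case: rec_pair. Qed.
Lemma rp2 k a b n : (rec_pair k a b n.+1).2 = k * (rec_pair k a b n).2 + (rec_pair k a b n).1.
Proof. by rewrite /=; case: rec_pair. Qed.

Lemma aseq_rec k a b n : 1 <= n -> aseq k a b n.+2 = k * aseq k a b n.+1 + aseq k a b n.
Proof.
case: n => // n _. by rewrite /aseq /=; case: rec_pair.
Qed.

Lemma rp_inv k a b n : 0 < a -> 0 < b -> coprime a b ->
  [/\ 0 < (rec_pair k a b n).1, 0 < (rec_pair k a b n).2 &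
      coprime (rec_pair k a b n).1 (rec_pair k a b n).2].
Proof.
move=> a0 b0 co. elim: n => [|n [h1 h2 h3]] //=.
rewrite rp1 rp2; split => //; first by rewrite addn_gt0 h1 orbT.
exact: coprime_step.
Qed.

Lemma aseq_inv k a b n : 0 < a -> 0 < b -> coprime a b -> 1 <= n ->
  [/\ 0 < aseq k a b n, 0 < aseq k a b n.+1 & coprime (aseq k a b n) (aseq k a b n.+1)].
Proof.
move=> a0 b0 co; case: n => // n _.
rewrite /aseq /= rp1. exact: rp_inv.
Qed.

Lemma Gamma_seq_step k a b n : 0 < a -> 0 < b -> coprime a b -> 1 <= n ->
  Gamma (aseq k a b n.+1) (aseq k a b n.+2) =
  if odd k && ~~ odd (aseq k a b n.+1) then 3 - Gamma (aseq k a b n) (aseq k a b n.+1)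
  else Gamma (aseq k a b n) (aseq k a b n.+1).
Proof.
move=> a0 b0 co n1. case: (aseq_inv k a b n a0 b0 co n1) => h1 h2 h3.
rewrite aseq_rec //. exact: Gamma_step.
Qed.

Lemma div3_step j : 1 <= j ->
  odd (j %/ 3) = (if j %% 3 == 0 then ~~ odd ((j-1) %/ 3) else odd ((j-1) %/ 3)).
Proof.
move=> j1. case: eqP => h.
- have -> : j %/ 3 = ((j-1) %/ 3).+1 by lia. by rewrite oddS.
- have -> : j %/ 3 = (j-1) %/ 3 by lia. by [].
Qed.

Lemma xseq_step j : 1 <= j -> xseq j.+1 = if j %% 3 == 0 then 3 - xseq j else xseq j.
Proof.
move=> j1; rewrite /xseq subSS subn0 div3_step //.
by case: (j %% 3 == 0); case: (odd _).
Qed.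

Lemma yseq_step j : 1 <= j -> yseq j.+1 = if j %% 3 == 0 then 3 - yseq j else yseq j.
Proof.
move=> j1; rewrite /yseq subSS subn0 div3_step //.
by case: (j %% 3 == 0); case: (odd _).
Qed.

Lemma pattern (G : nat -> nat) :
  (G 1 = 1 \/ G 1 = 2) ->
  (forall j, 1 <= j -> G j.+1 = if j %% 3 == 0 then 3 - G j else G j) ->
  (forall j, 1 <= j -> G j = xseq j) \/ (forall j, 1 <= j -> G j = yseq j).
Proof.
move=> [h|h] st; [left|right]; elim=> [//|j IH] _; case: j IH => [|j] IH; rewrite ?h //.
- by rewrite st // xseq_step // IH.
- by rewrite st // yseq_step // IH.
Qed.

Lemma parity3 k a b n : odd k -> 1 <= n ->
  odd (aseq k a b n.+3) = odd (aseq k a b n).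
Proof.
move=> ok n1.
rewrite (aseq_rec k a b n.+1) // (aseq_rec k a b n) //.
rewrite !(oddD, oddM) ok /=.
by case: (odd (aseq k a b n)); case: (odd (aseq k a b n.+1)).
Qed.

Lemma parity_all k a b m : odd k -> 1 <= m ->
  ~~ odd (aseq k a b m) -> odd (aseq k a b m.+1) ->
  forall i, ~~ odd (aseq k a b (m + i)) = (i %% 3 == 0).
Proof.
move=> ok m1 e0 e1.
have e2 : odd (aseq k a b m.+2) by rewrite aseq_rec // oddD oddM ok e1 (negbTE e0).
elim/ltn_ind => i IH.
case: (ltnP i 3) => hi.
- case: i hi IH => [|[|[|i]]] // _ _; rewrite ?addn0 ?addn1 ?addn2 ?e0 ?e1 ?e2 //.
- have -> : m + i = (m + (i - 3)).+3 by lia.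
  rewrite parity3 //; last by lia.
  rewrite IH; last by lia.
  have -> : (i - 3) %% 3 = i %% 3 by lia. by [].
Qed.

Lemma gseq_main k a b m : 0 < a -> 0 < b -> coprime a b -> odd k -> 1 <= m ->
  ~~ odd (aseq k a b m) -> odd (aseq k a b m.+1) ->
  gseq_from k a b m xseq \/ gseq_from k a b m yseq.
Proof.
move=> a0 b0 co ok m1 e0 e1.
have P := parity_all k a b m ok m1 e0 e1.
apply: (pattern (fun j => Gamma (aseq k a b (m + j - 1)) (aseq k a b (m + j)))).
- exact: Gamma12.
- move=> j j1.
  have := Gamma_seq_step k a b (m + j - 1) a0 b0 co ltac:(lia).
  have -> : (m + j - 1).+2 = m + j.+1 by lia.
  have -> : (m + j - 1).+1 = m + j by lia.
  have -> : m + j.+1 - 1 = m + j by lia.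
  by rewrite ok /= P => ->.
Qed.

Theorem theorem5p2 (a b k : nat) :
  0 < a -> 0 < b -> 0 < k -> coprime a b ->
  (~~ odd k -> exists c, forall n, 1 <= n ->
       Gamma (aseq k a b n) (aseq k a b n.+1) = c) /\
  (odd k ->
     (odd a -> odd b -> gseq_from k a b 3 xseq \/ gseq_from k a b 3 yseq) /\
     (odd a -> ~~ odd b -> gseq_from k a b 2 xseq \/ gseq_from k a b 2 yseq) /\
     (~~ odd a -> odd b -> gseq_from k a b 1 xseq \/ gseq_from k a b 1 yseq)).
Proof.
move=> a0 b0 k0 co. split.
- move=> ek. exists (Gamma (aseq k a b 1) (aseq k a b 2)).
  case=> // n _. elim: n => [//|n IH].
  by rewrite Gamma_seq_step // (negbTE ek) /= IH.
- move=> ok.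
  have A1 : aseq k a b 1 = a by [].
  have A2 : aseq k a b 2 = b by [].
  have A3 : aseq k a b 3 = k * b + a by rewrite aseq_rec.
  have A4 : aseq k a b 4 = k * (k * b + a) + b by rewrite aseq_rec // A3.
  split; [|split].
  + move=> oa ob. apply: gseq_main => //.
    * by rewrite A3 !(oddD, oddM) ok oa ob.
    * by rewrite A4 !(oddD, oddM) ok oa ob.
  + move=> oa ob. apply: gseq_main => //.
    by rewrite A3 !(oddD, oddM) ok oa (negbTE ob).
  + move=> oa ob. by apply: gseq_main.
Qed.
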